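(* Let $p\geq 3$ be a prime and let $H=(a_1,\dots,a_p)^\perp\subset\mathbb{R}^p$ be a hyperplane. Assume there exists $i$ such that $a_j\neq a_i$ for all $j\neq i$. Then $|H\cap S_pv|\leq (p-1)!$ for all $v\in\mathbb{R}^p$ with pairwise distinct coordinates.
   Context: $S_p$ acts on $\mathbb{R}^p$ by permuting coordinates and $S_pv$ is the orbit of $v$. $(a_1,\dots,a_p)^\perp$ denotes the hyperplane $\{x:\sum_m a_mx_m=0\}$ with $(a_1,\dots,a_p)\neq 0$. *)

(* Defs.v *)
From mathcomp Require Import all_boot all_order all_algebra all_fingroup.
From mathcomp Require Import reals.
Set Implicit Arguments. Unset Strict Implicit. Unset Printing Implicit Defensive.
Import Order.TTheory GRing.Theory Num.Theory.
Local Open Scope ring_scope.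

Definition perm_act (R : realType) (p : nat) (s : 'S_p) (v : 'rV[R]_p) : 'rV[R]_p :=
  \row_m v 0 ((s^-1)%g m).

Definition orbit_vec (R : realType) (p : nat) (v : 'rV[R]_p) : seq 'rV[R]_p :=
  undup [seq perm_act s v | s <- enum 'S_p].

Definition in_hyperplane (R : realType) (p : nat) (a x : 'rV[R]_p) : bool :=
  \sum_(m < p) a 0 m * x 0 m == 0.

Definition card_hyp_orbit (R : realType) (p : nat) (a v : 'rV[R]_p) : nat :=
  size [seq x <- orbit_vec v | in_hyperplane a x].

(* Main.v *)
Require Import Defs.
From mathcomp Require Import all_boot all_order all_algebra all_fingroup.
From mathcomp Require Import reals.
From mathcomp Require Import ring.
Set Implicit Arguments. Unset Strict Implicit. Unset Printing Implicit Defensive.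
Import Order.TTheory GRing.Theory Num.Theory.
Local Open Scope ring_scope.

Section Main.
Variables (R : realType) (p : nat).
Implicit Types (A V : 'I_p -> R) (t : 'S_p).

Definition fA A V t := \sum_m A m * V (t m).

Lemma sumV V t : \sum_m V (t m) = \sum_m V m.
Proof. by rewrite [RHS](reindex_inj (@perm_inj _ t)). Qed.

Lemma cntV V t (b : R) : (\sum_m ((V (t m) < b)%R : nat) = \sum_m ((V m < b)%R : nat))%N.
Proof. by rewrite [RHS](reindex_inj (@perm_inj _ t)). Qed.

Lemma fAN A V t : fA (fun m => - A m) V t = - fA A V t.
Proof. by rewrite /fA -sumrN; apply: eq_bigr => m _; rewrite mulNr. Qed.

Variable (i : 'I_p).

Lemma mono V (P : pred 'I_p) t1 t2 :
  i \notin P ->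
  (forall m, m != i -> m \notin P -> t1 m = t2 m) ->
  (forall j j', j \in P -> j' \in P -> (V (t1 j) < V (t1 j')) = (V (t2 j) < V (t2 j'))) ->
  V (t1 i) <= V (t2 i) ->
  forall j, j \in P -> V (t2 j) <= V (t1 j).
Proof.
move=> iP eqQ pat le12 j jP.
rewrite leNgt; apply/negP => lt12.
have E := cntV V t1 (V (t2 j)); rewrite -(cntV V t2 (V (t2 j))) in E.
have : (\sum_m ((V (t2 m) < V (t2 j))%R : nat) < \sum_m ((V (t1 m) < V (t2 j))%R : nat))%N.
  rewrite (bigD1 j) //= [X in (_ < X)%N](bigD1 j) //=.
  rewrite ltxx lt12 add0n add1n ltnS.
  apply: leq_sum => m mj.
  case: (boolP (m \in P)) => mP.
    rewrite -(pat m j mP jP).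
    by case h: (V (t1 m) < V (t1 j)) => //=; rewrite (lt_trans h lt12).
  case: (eqVneq m i) => [->|mi]; last by rewrite eqQ.
  by case h: (V (t2 i) < V (t2 j)) => //=; rewrite (le_lt_trans le12 h).
by rewrite E ltnn.
Qed.


Lemma fX A V (P : pred 'I_p) t1 t2 : injective V ->
  i \notin P -> (forall j, j \in P -> A i < A j) ->
  (forall m, m != i -> m \notin P -> t1 m = t2 m) ->
  (forall j j', j \in P -> j' \in P -> (V (t1 j) < V (t1 j')) = (V (t2 j) < V (t2 j'))) ->
  V (t1 i) <= V (t2 i) ->
  fA A V t2 <= fA A V t1 /\ (fA A V t1 = fA A V t2 -> t1 = t2).
Proof.
move=> Vinj iP AP eqQ pat le12.
have key : fA A V t1 - fA A V t2 = \sum_m (A m - A i) * (V (t1 m) - V (t2 m)).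
  have H0 : \sum_m (V (t1 m) - V (t2 m)) = 0 by rewrite sumrB !sumV subrr.
  rewrite /fA -sumrB.
  transitivity (\sum_m ((A m - A i) * (V (t1 m) - V (t2 m))) + A i * \sum_m (V (t1 m) - V (t2 m))).
    by rewrite mulr_sumr -big_split /=; apply: eq_bigr => m _; ring.
  by rewrite H0 mulr0 addr0.
have ge0 : forall m, 0 <= (A m - A i) * (V (t1 m) - V (t2 m)).
  move=> m; case: (boolP (m \in P)) => mP.
    apply: mulr_ge0; first by rewrite subr_ge0 ltW // AP.
    by rewrite subr_ge0 (mono iP eqQ pat le12).
  case: (eqVneq m i) => [->|mi]; first by rewrite subrr mul0r.
  by rewrite eqQ // subrr mulr0.
split.
  by rewrite -subr_ge0 key; apply: sumr_ge0 => m _; exact: ge0.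
move=> e.
have Z : \sum_m (A m - A i) * (V (t1 m) - V (t2 m)) = 0 by rewrite -key e subrr.
have Z1 := psumr_eq0P (fun m _ => ge0 m) Z.
have eqm : forall m, m != i -> t1 m = t2 m.
  move=> m mi; case: (boolP (m \in P)) => mP; last exact: eqQ.
  have /eqP := Z1 m isT; rewrite mulf_eq0 => /orP[|].
    by rewrite subr_eq0 => /eqP h; have := AP m mP; rewrite h ltxx.
  by rewrite subr_eq0 => /eqP /Vinj.
have eqi : t1 i = t2 i.
  set m := (t2^-1)%g (t1 i).
  have tm : t2 m = t1 i by rewrite /m permKV.
  case: (eqVneq m i) => [mi|mi]; first by rewrite -tm mi.
  by move: tm; rewrite -(eqm m mi) => /perm_inj h; rewrite h eqxx in mi.
by apply/permP => m; case: (eqVneq m i) => [->|mi] //; exact: eqm.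
Qed.


Lemma descent V (i0 : 'I_p) (P : pred 'I_p) : injective V ->
  (forall k, V i0 <= V k) -> i \notin P ->
  forall t, (forall m, t m = i0 -> m = i \/ m \in P) ->
  exists K : 'S_p, [/\ K i = i0, (forall m, m != i -> m \notin P -> K m = t m) &
     (forall j j', j \in P -> j' \in P -> (V (K j) < V (K j')) = (V (t j) < V (t j')))].
Proof.
move=> Vinj i0min iP t0.
suff : forall n t, (#|[set k | (V k < V (t i))%R]| < n)%N -> (forall m, t m = i0 -> m = i \/ m \in P) ->
  exists K : 'S_p, [/\ K i = i0, (forall m, m != i -> m \notin P -> K m = t m) &
     (forall j j', j \in P -> j' \in P -> (V (K j) < V (K j')) = (V (t j) < V (t j')))].
  by move=> H; apply: (H _ t0 (ltnSn _)).
elim=> [//|n IH] t hn ht.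
case: (eqVneq (t i) i0) => [e|ne]; first by exists t; split.
set j0 := (t^-1)%g i0.
have tj0 : t j0 = i0 by rewrite /j0 permKV.
have j0P : j0 \in P.
  case: (ht j0 tj0) => // e; by rewrite -e tj0 eqxx in ne.
have lt0 : V (t j0) < V (t i).
  rewrite tj0 lt_neqAle i0min andbT; apply/eqP => /Vinj e; by rewrite e eqxx in ne.
pose S := [pred j | (j \in P) && (V (t j) < V (t i))].
have j0S : S j0 by rewrite /S /= j0P lt0.
case: (arg_maxP (fun j => V (t j)) j0S) => j /andP[jP ltj] jmax.
have ij : i != j by apply/eqP => e; rewrite e jP in iP.
pose t' := (tperm i j * t)%g.
have t'E : forall m, t' m = t (tperm i j m) by move=> m; rewrite permM.
have t'P : forall k, k \in P -> t' k = if k == j then t i else t k.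
  move=> k kP; rewrite t'E; case: (eqVneq k j) => [->|kj]; first by rewrite tpermR.
  rewrite tpermD //; last by rewrite eq_sym.
  by apply/eqP => e; rewrite e kP in iP.
have hn' : (#|[set k | (V k < V (t' i))%R]| < n)%N.
  rewrite -ltnS; apply: leq_trans hn; apply: proper_card; apply/properP; split.
    apply/subsetP => k; rewrite !inE t'E tpermL => h; exact: lt_trans h ltj.
  by exists (t j); rewrite !inE ?ltj // t'E tpermL ltxx.
have ht' : forall m, t' m = i0 -> m = i \/ m \in P.
  move=> m; rewrite t'E => /ht; case: tpermP => [->|->|mi mj] // [e|e] //; by [left | right].
have [K [Ki KQ Kpat]] := IH t' hn' ht'.
exists K; split => //.
  move=> m mi mP; rewrite KQ // t'E tpermD // 1?eq_sym //.
  by apply/eqP => e; move: mP; rewrite e jP.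
move=> j1 j2 j1P j2P; rewrite Kpat // !t'P //.
have A1 : forall k, k \in P -> k != j -> (V (t k) < V (t i)) = (V (t k) < V (t j)).
  move=> k kP kj; apply/idP/idP => h; last exact: lt_trans h ltj.
  have kS : S k by rewrite /S /= kP h.
  have /= hk := jmax k kS.
  rewrite lt_neqAle hk andbT; apply/eqP => /Vinj /perm_inj e; by rewrite e eqxx in kj.
have A2 : forall k, k \in P -> (V (t i) < V (t k)) = (V (t j) < V (t k)).
  move=> k kP; apply/idP/idP => h; first exact: lt_trans ltj h.
  rewrite ltNge le_eqVlt negb_or; apply/andP; split.
    by apply/eqP => /Vinj /perm_inj e; move: iP; rewrite -e kP.
  apply/negP => hk.
  have kS : S k by rewrite /S /= kP hk.
  by have /= := jmax k kS; rewrite leNgt h.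
case: (eqVneq j1 j) => [->|n1]; case: (eqVneq j2 j) => [->|n2] //.
- by rewrite !ltxx.
- by rewrite A2.
- by rewrite A1.
Qed.

End Main.

Definition relb (R : realType) (p : nat) (V : 'I_p -> R) (i i0 : 'I_p) (P : pred 'I_p) (K t : 'S_p) :=
  [&& K i == i0, [forall m, ((m != i) && (m \notin P)) ==> (K m == t m)] &
     [forall j, [forall j', ((j \in P) && (j' \in P)) ==> ((V (K j) < V (K j')) == (V (t j) < V (t j')))]]].

Lemma relbP (R : realType) (p : nat) (V : 'I_p -> R) (i i0 : 'I_p) (P : pred 'I_p) (K t : 'S_p) :
  reflect [/\ K i = i0, (forall m, m != i -> m \notin P -> K m = t m) &
     (forall j j', j \in P -> j' \in P -> (V (K j) < V (K j')) = (V (t j) < V (t j')))]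
   (relb V i i0 P K t).
Proof.
apply: (iffP and3P) => [[/eqP h1 /forallP h2 /forallP h3]|[h1 h2 h3]]; split.
- done.
- by move=> m mi mP; have /implyP := h2 m; rewrite mi mP => /(_ isT) /eqP.
- move=> j j' jP j'P; have /forallP/(_ j')/implyP := h3 j.
  by rewrite jP j'P => /(_ isT) /eqP.
- by rewrite h1.
- by apply/forallP => m; apply/implyP => /andP[mi mP]; rewrite h2.
- apply/forallP => j; apply/forallP => j'; apply/implyP => /andP[jP j'P].
  by rewrite h3.
Qed.

Section Assembly.
Variables (R : realType) (p : nat) (A V : 'I_p -> R) (i i0 : 'I_p).
Hypothesis Vinj : injective V.
Hypothesis i0min : forall k, V i0 <= V k.
Hypothesis Auniq : forall j, j != i -> A j != A i.

Let Ph := [pred j | A i < A j].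
Let Pl := [pred j | A j < A i].
Let NA := fun m => - A m.

Lemma iPh : i \notin Ph. Proof. by rewrite inE ltxx. Qed.
Lemma iPl : i \notin Pl. Proof. by rewrite inE ltxx. Qed.
Lemma hPh : forall j, j \in Ph -> A i < A j. Proof. by []. Qed.
Lemma hPl : forall j, j \in Pl -> NA i < NA j. Proof. by move=> j; rewrite inE /NA ltrN2. Qed.

Lemma exists_rel t : exists K, relb V i i0 Ph K t || relb V i i0 Pl K t.
Proof.
set m0 := (t^-1)%g i0.
have tm0 : forall m, t m = i0 -> m = m0.
  by move=> m e; rewrite /m0 -e permK.
case: (boolP ((m0 == i) || (m0 \in Ph))) => h.
  have [|K [h1 h2 h3]] := descent Vinj i0min iPh (t := t).
    by move=> m /tm0 ->; case/orP: h => [/eqP ->|]; [left|right].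
  by exists K; apply/orP; left; apply/relbP.
have [|K [h1 h2 h3]] := descent Vinj i0min iPl (t := t).
  move=> m /tm0 ->; right.
  move: h; rewrite negb_or => /andP[mi mP].
  have := Auniq mi; rewrite inE; rewrite inE in mP.
  by rewrite neq_lt (negbTE mP) orbF.
by exists K; apply/orP; right; apply/relbP.
Qed.

Definition key t := odflt t [pick K | relb V i i0 Ph K t || relb V i i0 Pl K t].

Lemma keyP t : relb V i i0 Ph (key t) t || relb V i i0 Pl (key t) t.
Proof.
rewrite /key; case: pickP => [K //|H].
by have [K hK] := exists_rel t; rewrite H in hK.
Qed.

Lemma key_i t : key t i = i0.
Proof. by case/orP: (keyP t) => /relbP[]. Qed.

Lemma le_key (B : 'I_p -> R) (P : pred 'I_p) K t : i \notin P -> (forall j, j \in P -> B i < B j) ->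
  relb V i i0 P K t -> fA B V t <= fA B V K /\ (fA B V K = fA B V t -> K = t).
Proof.
move=> iP BP /relbP[h1 h2 h3]; apply: (fX Vinj iP BP h2 h3).
by rewrite h1 i0min.
Qed.

Lemma same_rel (B : 'I_p -> R) (P : pred 'I_p) K t1 t2 : i \notin P -> (forall j, j \in P -> B i < B j) ->
  relb V i i0 P K t1 -> relb V i i0 P K t2 -> fA B V t1 = fA B V t2 -> t1 = t2.
Proof.
move=> iP BP /relbP[h1 h2 h3] /relbP[g1 g2 g3] e.
have eQ : forall m, m != i -> m \notin P -> t1 m = t2 m by move=> m mi mP; rewrite -h2 // g2.
have pat : forall j j', j \in P -> j' \in P -> (V (t1 j) < V (t1 j')) = (V (t2 j) < V (t2 j')).
  by move=> j j' jP j'P; rewrite -h3 // g3.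
case: (leP (V (t1 i)) (V (t2 i))) => [le12|/ltW le21].
  by case: (fX Vinj iP BP eQ pat le12) => _ ->.
have eQ' : forall m, m != i -> m \notin P -> t2 m = t1 m by move=> m mi mP; rewrite eQ.
have pat' : forall j j', j \in P -> j' \in P -> (V (t2 j) < V (t2 j')) = (V (t1 j) < V (t1 j')).
  by move=> j j' jP j'P; rewrite pat.
by case: (fX Vinj iP BP eQ' pat' le21) => _ ->.
Qed.

Lemma key_inj t1 t2 : fA A V t1 = 0 -> fA A V t2 = 0 -> key t1 = key t2 -> t1 = t2.
Proof.
move=> z1 z2 ek.
have zN : forall t, fA A V t = 0 -> fA NA V t = 0 by move=> t z; rewrite /NA fAN z oppr0.
have e12 : fA A V t1 = fA A V t2 by rewrite z1 z2.
have e12N : fA NA V t1 = fA NA V t2 by rewrite zN // zN.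
case/orP: (keyP t1) => r1; case/orP: (keyP t2) => r2; rewrite ?ek in r1.
- exact: (same_rel iPh hPh r1 r2 e12).
- have [l1 q1] := le_key iPh hPh r1.
  have [l2 q2] := le_key iPl hPl r2.
  rewrite /NA !fAN lerN2 in l2.
  have eK : fA A V (key t2) = 0 by apply: le_anti; apply/andP; split; [rewrite -z2 | rewrite -z1].
  have h1 := q1 (etrans eK (esym z1)).
  have h2 := q2 ltac:(by rewrite /NA !fAN eK z2).
  by rewrite -h1 h2.
- have [l1 q1] := le_key iPl hPl r1.
  have [l2 q2] := le_key iPh hPh r2.
  rewrite /NA !fAN lerN2 in l1.
  have eK : fA A V (key t2) = 0 by apply: le_anti; apply/andP; split; [rewrite -z1 | rewrite -z2].
  have h2 := q2 (etrans eK (esym z2)).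
  have h1 := q1 ltac:(by rewrite /NA !fAN eK z1).
  by rewrite -h1 h2.
- exact: (same_rel iPl hPl r1 r2 e12N).
Qed.

Lemma count_good : (#|[set t : 'S_p | (fA A V t == 0)%R]| <= p.-1`!)%N.
Proof.
rewrite -(card_in_imset (f := key)); last first.
  by move=> t1 t2; rewrite !inE => /eqP z1 /eqP z2; apply: key_inj.
apply: (@leq_trans #|[set K : 'S_p | K i == i0]|).
  apply: subset_leq_card; apply/subsetP => K /imsetP[t _ ->]; by rewrite inE key_i.
rewrite -(card_imset _ (mulIg (tperm i0 i))).
apply: (@leq_trans #|perm_on [set~ i]|); last by rewrite card_perm cardsC1 card_ord.
apply: subset_leq_card; apply/subsetP => s /imsetP[K]; rewrite inE => /eqP Ki ->.
apply/subsetP => x; rewrite inE !inE permM; apply: contra => /eqP ->.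
by rewrite Ki tpermL.
Qed.

End Assembly.

Theorem corollary4p2 (R : realType) (p : nat) (a : 'rV[R]_p) :
  prime p -> (3 <= p)%N -> a != 0 ->
  (exists i : 'I_p, forall j : 'I_p, j != i -> a 0 j != a 0 i) ->
  forall v : 'rV[R]_p, injective (fun m : 'I_p => v 0 m) ->
  (card_hyp_orbit a v <= (p.-1)`!)%N.
Proof.
move=> _ _ _ [i hi] v vinj.
pose A := fun m => a 0 m; pose V := fun m => v 0 m.
case: (arg_minP V (P := predT) (i0 := i) isT) => i0 _ i0min'.
have i0min : forall k, V i0 <= V k := fun k => i0min' k isT.
apply: leq_trans (count_good (A := A) vinj i0min hi).
rewrite /card_hyp_orbit /orbit_vec filter_undup.
apply: leq_trans (size_undup _) _.
rewrite filter_map size_map.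
have -> : #|[set t : 'S_p | (fA A V t == 0)%R]| = #|[set s : 'S_p | in_hyperplane a (perm_act s v)]|.
  rewrite -(card_preimset _ (@invg_inj _)); apply: eq_card => s.
  by rewrite !inE /in_hyperplane /fA; congr (_ == _); apply: eq_bigr => m _; rewrite mxE.
rewrite cardE /enum_mem -filter_predI; apply: eq_leq; congr size.
by apply: eq_filter => s /=; rewrite [RHS]inE; case: (in_hyperplane _ _).
Qed.
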